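(* If the set of control constraints $\mathcal{U}$ satisfies Putinar's condition, then so does the set $\mathcal{T}\cup\mathcal{B}\cup\mathcal{U}$ (as a set of polynomials in the variables $(t,x,u)$).
   Context: Fix $n\ge1$, $T>0$, $K\ge1$. Let $\mathcal{U}=\{q_1,\dots,q_r\}$ be real polynomials in $u\in\mathbb{R}^K$ such that $U=\{u:q(u)\ge0\ \forall q\in\mathcal{U}\}$ is compact. A Hermitian trace-one matrix $\rho\in\mathbb{C}^{n\times n}$ is represented by the real vector $x$ consisting of $\operatorname{Re}\rho_{ij}$ for $1\le i\le j\le n$ excluding $\operatorname{Re}\rho_{nn}$, and $\operatorname{Im}\rho_{ij}$ for $1\le i<j\le n$ (with $\rho_{nn}=1-\sum_{i<n}\rho_{ii}$, $\rho_{ji}=\overline{\rho_{ij}}$); in these coordinates $\operatorname{tr}\rho^2=(1-\sum_{i=1}^{n-1}\operatorname{Re}\rho_{ii})^2+\sum_{i=1}^{n-1}\operatorname{Re}\rho_{ii}^2+2\sum_{1\le i<j\le n}|\rho_{ij}|^2$. Set $\mathcal{T}=\{t,\ T-t\}$ (polynomials in $t$) and $\mathcal{B}=\{1-\operatorname{tr}\rho^2,\ \operatorname{tr}\rho^2-1\}$ (polynomials in $x$). For a finite set $\mathcal{S}=\{a_1,\dots,a_p\}$ of real polynomials in variables $y=(y_1,\dots,y_N)$, $Q_d[\mathcal{S}]=\{s_0+\sum_{i=1}^p s_ia_i: s_i \text{ sums of squares of real polynomials in } y,\ \deg(s_ia_i)\le d\}$. $\mathcal{S}$ satisfies Putinar's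 condition if there exists $M>0$ such that $M-\sum_{i=1}^N y_i^2\in Q_d[\mathcal{S}]$ for some $d$. *)

(* Defs.v *)
From HB Require Import structures.
From mathcomp Require Import all_boot all_order all_algebra.
From mathcomp Require Import reals.
From mathcomp Require Import mpoly.
Set Implicit Arguments. Unset Strict Implicit. Unset Printing Implicit Defensive.
Import Order.TTheory GRing.Theory Num.Theory.
Local Open Scope ring_scope.

Section Quadmod.
Variables (R : realType) (N : nat).

Definition is_sos (s : {mpoly R[N]}) : Prop :=
  exists l : seq {mpoly R[N]}, s = \sum_(p <- l) p ^+ 2.

(* total degree of p is <= d (the zero polynomial has degree -oo);
   msize p = 1 + total degree, msize 0 = 0 *)
Definition deg_le (p : {mpoly R[N]}) (d : nat) : Prop := (msize p <= d.+1)%N.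

Definition in_Qd (d : nat) (S : seq {mpoly R[N]}) (f : {mpoly R[N]}) : Prop :=
  exists (s0 : {mpoly R[N]}) (s : seq {mpoly R[N]}),
    [/\ size s = size S,
        is_sos s0 /\ deg_le s0 d,
        forall i, (i < size S)%N -> is_sos s`_i /\ deg_le (s`_i * S`_i) d
      & f = s0 + \sum_(i < size S) s`_i * S`_i].

Definition putinar (S : seq {mpoly R[N]}) : Prop :=
  exists M : R, 0 < M /\
    exists d : nat, in_Qd d S (M%:MP - \sum_(i < N) 'X_i ^+ 2).

End Quadmod.

(* Off-diagonal index pairs i < j of an n x n matrix. *)
Definition Pairs (n : nat) := {p : 'I_n * 'I_n | (p.1 < p.2)%N}.

(* number of real coordinates of x: (n-1) diagonal reals, and for each i<j
   Re and Im of rho_ij : total n^2 - 1 *)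
Definition nx (n : nat) : nat := (n.-1 + (#|{: Pairs n}| + #|{: Pairs n}|))%N.

Definition nvars (n K : nat) : nat := (1 + nx n + K)%N.

Definition tvar (n K : nat) : 'I_(nvars n K) :=
  lshift K (lshift (nx n) (ord0 : 'I_1)).
(* x-coordinate Re rho_{i+1,i+1}, i < n-1 *)
Definition avar (n K : nat) (i : 'I_n.-1) : 'I_(nvars n K) :=
  lshift K (rshift 1 (lshift (#|{: Pairs n}| + #|{: Pairs n}|) i)).
(* x-coordinate Re rho_ij, i<j *)
Definition bvar (n K : nat) (p : Pairs n) : 'I_(nvars n K) :=
  lshift K (rshift 1 (rshift n.-1 (lshift #|{: Pairs n}| (enum_rank p)))).
(* x-coordinate Im rho_ij, i<j *)
Definition cvar (n K : nat) (p : Pairs n) : 'I_(nvars n K) :=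
  lshift K (rshift 1 (rshift n.-1 (rshift #|{: Pairs n}| (enum_rank p)))).
Definition uvar (n K : nat) (k : 'I_K) : 'I_(nvars n K) :=
  rshift (1 + nx n) k.

Section Sets.
Variables (R : realType) (n K : nat).
Local Notation P := {mpoly R[nvars n K]}.

Definition trrho2 : P :=
  (1 - \sum_(i < n.-1) 'X_(avar K i)) ^+ 2
  + \sum_(i < n.-1) 'X_(avar K i) ^+ 2
  + 2%:R * \sum_(p : Pairs n) ('X_(bvar K p) ^+ 2 + 'X_(cvar K p) ^+ 2).

Definition Tset (T : R) : seq P := [:: 'X_(tvar n K); T%:MP - 'X_(tvar n K)].
Definition Bset : seq P := [:: 1 - trrho2; trrho2 - 1].

Definition lift_u (q : {mpoly R[K]}) : P :=
  q \mPo [tuple 'X_(uvar n i) | i < K].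

Definition TBU (T : R) (U : seq {mpoly R[K]}) : seq P :=
  Tset T ++ Bset ++ map lift_u U.
End Sets.

(* Main.v *)
Require Import Defs.
From HB Require Import structures.
From mathcomp Require Import all_boot all_order all_algebra.
From mathcomp Require Import reals.
From mathcomp Require Import mpoly.
From mathcomp Require Import ring.
Import Order.TTheory GRing.Theory Num.Theory.
Local Open Scope ring_scope.

Section L.
Variables (R : realType) (n K : nat).
Local Notation P := {mpoly R[nvars n K]}.

Lemma lift_uD p q : @lift_u R n K (p + q) = @lift_u R n K p + @lift_u R n K q :> P.
Proof. by rewrite /lift_u rmorphD. Qed.
Lemma lift_uM p q : @lift_u R n K (p * q) = @lift_u R n K p * @lift_u R n K q :> P.
Proof. by rewrite /lift_u rmorphM. Qed.
Lemma lift_uB p q : @lift_u R n K (p - q) = @lift_u R n K p - @lift_u R n K q :> P.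
Proof. by rewrite /lift_u rmorphB. Qed.
Lemma lift_uC c : @lift_u R n K (c%:MP : {mpoly R[K]}) = c%:MP :> P.
Proof. by rewrite /lift_u comp_mpolyC. Qed.
Lemma lift_u0 : @lift_u R n K (0 : {mpoly R[K]}) = 0 :> P.
Proof. by rewrite /lift_u rmorph0. Qed.
Lemma lift_uXU k : @lift_u R n K ('X_k : {mpoly R[K]}) = 'X_(uvar n k) :> P.
Proof. by rewrite /lift_u comp_mpolyXU -tnth_nth tnth_mktuple. Qed.
Lemma lift_usum I (r : seq I) (F : I -> {mpoly R[K]}) :
  @lift_u R n K (\sum_(i <- r) F i) = \sum_(i <- r) @lift_u R n K (F i) :> P.
Proof. by rewrite /lift_u rmorph_sum. Qed.
Lemma lift_usos s : is_sos s -> is_sos (@lift_u R n K s : P).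
Proof.
case=> l ->; exists (map (@lift_u R n K) l); rewrite lift_usum big_map.
by apply: eq_bigr => p _; rewrite /lift_u rmorphXn.
Qed.
End L.

Lemma sos_add (R : realType) N (a b : {mpoly R[N]}) : is_sos a -> is_sos b -> is_sos (a + b).
Proof. by case=> l -> [m ->]; exists (l ++ m); rewrite big_cat. Qed.
Lemma sos_sq (R : realType) N (a : {mpoly R[N]}) : is_sos (a ^+ 2).
Proof. by exists [:: a]; rewrite big_seq1. Qed.
Lemma sos0 (R : realType) N : is_sos (0 : {mpoly R[N]}).
Proof. by exists [::]; rewrite big_nil. Qed.
Lemma sos_sum (R : realType) N I (r : seq I) (F : I -> {mpoly R[N]}) :
  (forall i, is_sos (F i)) -> is_sos (\sum_(i <- r) F i).
Proof. move=> H; elim: r => [|a r IH]; first by rewrite big_nil; apply: sos0.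
by rewrite big_cons; apply: sos_add. Qed.
Lemma sumX2 (R : realType) n K :
  \sum_(i < nvars n K) ('X_i : {mpoly R[nvars n K]}) ^+ 2 =
  'X_(tvar n K) ^+ 2 + (\sum_(i < n.-1) 'X_(avar K i) ^+ 2
    + \sum_(p : Pairs n) ('X_(bvar K p) ^+ 2 + 'X_(cvar K p) ^+ 2))
  + \sum_(k < K) 'X_(uvar n k) ^+ 2.
Proof.
rewrite /nvars big_split_ord /= big_split_ord /= big_ord1.
rewrite /nx big_split_ord /= big_split_ord /=.
rewrite !(reindex (@enum_rank (Pairs n))) /=; last first.
- by exists enum_val => x _; [rewrite enum_rankK | rewrite enum_valK].
- by exists enum_val => x _; [rewrite enum_rankK | rewrite enum_valK].
by rewrite -big_split.
Qed.

Lemma tkey (R : realType) N (r c t : {mpoly R[N]}) : (c * r) ^+ 2 = 1 ->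
  ((r ^+ 2 - t) * c) ^+ 2 * t + (r ^+ 2 + (t * c) ^+ 2) * (r ^+ 2 - t)
  = r ^+ 4 - t ^+ 2.
Proof.
move=> H.
have E : ((r ^+ 2 - t) * c) ^+ 2 * t + (r ^+ 2 + (t * c) ^+ 2) * (r ^+ 2 - t)
  - (r ^+ 4 - t ^+ 2) = ((c * r) ^+ 2 - 1) * (r ^+ 2 * t - t ^+ 2) by ring.
by apply/eqP; rewrite -subr_eq0 E H subrr mul0r.
Qed.

Theorem lemma4 (R : realType) (n K : nat) (T : R) (U : seq {mpoly R[K]}) :
  (1 <= n)%N -> (1 <= K)%N -> 0 < T ->
  putinar U -> putinar (TBU n T U).
Proof.
move=> n1 K1 T0 [M [M0 [d [s0 [s [Hsz Hs0 Hs Heq]]]]]].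
pose L := @lift_u R n K.
pose rT := Num.sqrt T.
have rT0 : 0 < rT by rewrite sqrtr_gt0.
pose tX : {mpoly R[nvars n K]} := 'X_(tvar n K).
pose sig_t := ((T%:MP - tX) * (rT^-1)%:MP) ^+ 2.
pose sig_T := (rT%:MP) ^+ 2 + (tX * (rT^-1)%:MP) ^+ 2.
pose s' := [:: sig_t; sig_T; 1; 0] ++ map L s.
pose s0' := L s0 + (1 - \sum_(i < n.-1) 'X_(avar K i)) ^+ 2
   + \sum_(p : Pairs n) ('X_(bvar K p) ^+ 2 + 'X_(cvar K p) ^+ 2).
pose S := TBU n T U.
have HS : size S = (size U).+4 by rewrite /S /TBU /= size_map.
have Hs' : size s' = size S by rewrite HS /s' /= size_map Hsz.
pose d' := maxn (msize s0') (\max_(i < size S) msize (s'`_i * S`_i)).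
exists (T ^+ 2 + 1 + M); split.
  by rewrite -addrA ltr_wpDl ?sqr_ge0 // addr_gt0.
exists d', s0', s'; split.
- exact: Hs'.
- split; last by rewrite /deg_le leqW // leq_maxl.
  rewrite /s0'; apply: sos_add; [apply: sos_add; [exact: (lift_usos _ _ _ _ Hs0.1) | exact: sos_sq]|].
  by apply: sos_sum => p; apply: sos_add; apply: sos_sq.
- move=> i Hi; split; last first.
    rewrite /deg_le leqW // (leq_trans _ (leq_maxr _ _)) //.
    exact: (@leq_bigmax _ (fun j : 'I_(size S) => msize (s'`_j * S`_j)) (Ordinal Hi)).
  case: i Hi => [|[|[|[|i]]]] Hi /=.
  + exact: sos_sq.
  + by apply: sos_add; apply: sos_sq.
  + by exists [:: 1]; rewrite big_seq1 expr1n.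
  + exact: sos0.
  + rewrite HS ltnS in Hi.
    rewrite (nth_map 0); last by rewrite Hsz.
    exact: (lift_usos _ _ _ _ (Hs i Hi).1).
- rewrite sumX2 /TBU /Tset /Bset /s' /=.
  rewrite !big_ord_recl /=.
  have hU : \sum_(i < size [seq lift_u (R:=R) n i | i <- U])
        [seq L i | i <- s]`_(0 + i) * [seq lift_u (R:=R) n i | i <- U]`_(0 + i)
      = M%:MP - \sum_(k < K) 'X_(uvar n k) ^+ 2 - L s0.
    transitivity (\sum_(i < size U) L (s`_i * U`_i)).
      rewrite size_map; apply: eq_bigr => i _.
      by rewrite add0n !(nth_map 0) ?Hsz // /L lift_uM.
    rewrite -lift_usum.
    have -> : \sum_(i < size U) s`_i * U`_i = M%:MP - \sum_(i < K) 'X_i ^+ 2 - s0.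
      by rewrite Heq [s0 + _]addrC addrK.
    rewrite !lift_uB lift_uC lift_usum; congr (_ - _ - _).
    by apply: eq_bigr => k _; rewrite /L /lift_u rmorphXn /= -/(lift_u n _) lift_uXU.
  have hT : sig_t * tX + sig_T * (T%:MP - tX) = (T ^+ 2)%:MP - tX ^+ 2.
    have hT2 : T%:MP = (rT%:MP) ^+ 2 :> {mpoly R[nvars n K]}.
      by rewrite -rmorphXn /= sqr_sqrtr // ltW.
    have -> : (T ^+ 2)%:MP = (rT%:MP) ^+ 4 :> {mpoly R[nvars n K]}.
      by rewrite rmorphXn /= hT2 -exprM.
    rewrite /sig_t /sig_T hT2; apply: tkey.
    by rewrite -rmorphM -rmorphXn /= mulVf ?expr1n ?rmorph1 // gt_eqF.
  rewrite [sig_t * _ + _]addrA hT hU /s0' /trrho2 !mpolyCD mpolyC1.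
  rewrite /tX.
  set A := (\sum_(i < n.-1) 'X_(avar K i) ^+ 2).
  set A1 := (\sum_(i < n.-1) 'X_(avar K i)).
  set B := \sum_(p : Pairs n) ('X_(bvar K p) ^+ 2 + 'X_(cvar K p) ^+ 2).
  set C := \sum_(k < K) 'X_(uvar n k) ^+ 2.
  set ls := L s0. set b := (T^+2)%:MP. set c := M%:MP. set x := 'X_(tvar n K).
  clearbody A A1 B C ls b c x.
  ring.
Qed.
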